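(* Let $q$ be an acyclic Boolean conjunctive query without self-join, let $F,G\in q$, let $z\in\mathit{vars}(q)$ and let $c$ be a constant. Let $q'=q[z\mapsto c]$, $F'=F[z\mapsto c]$ and $G'=G[z\mapsto c]$. Then: (1) $q'$ is acyclic; (2) if $F'$ attacks $G'$ in the attack graph of $q'$, then $F$ attacks $G$ in the attack graph of $q$; (3) if $F'$ attacks $G'$ in the attack graph of $q'$ and the attack $F\to G$ in the attack graph of $q$ is weak, then the attack $F'\to G'$ is weak.
   Context: Atoms $R(s_1,\dots,s_n)$ have variables or constants as arguments; each relation name has a signature $[n,k]$ with primary key positions $1,\dots,k$. $\mathit{key}(F)$ is the set of variables in the primary-key positions of atom $F$, $\mathit{vars}(F)$ the set of variables of $F$. A Boolean conjunctive query $q$ is a finite set of atoms; $\mathit{vars}(q)$ its variables; it has a self-join if a relation name occurs in two of its atoms. For a query or atom $X$, $X[z\mapsto c]$ denotes the result of replacing every occurrence of variable $z$ by constant $c$. A join tree for $q$ is an undirected tree on the atoms of $q$ such that whenever a variable occurs in atoms $F$ and $G$ it occurs in every atom on the path between them; the edge between $F$ and $G$ is labeled $\mathit{vars}(F)\cap\mathit{vars}(G)$. $q$ is acyclic if it has a join tree. $\mathit{FD}(q)=\{\mathit{key}(F)\to\mathit{vars}(F)\mid F\in q\}$; $F^{+,q}=\{x\in\mathit{vars}(q)\mid \mathit{FD}(q\setminus\{F\})\models\mathit{key}(F)\to x\}$; $F^{\oplus,q}=\{x\in\mathit{vars}(q)\mid \mathit{FD}(q)\models\mathit{key}(F)\to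 x\}$. The attack graph of an acyclic $q$, computed from any join tree $\tau$ (independent of the choice), has an edge (attack) $F\to G$ for distinct atoms iff every label $L$ on the path between $F$ and $G$ in $\tau$ satisfies $L\not\subseteq F^{+,q}$. An attack $F\to G$ is weak if $\mathit{key}(G)\subseteq F^{\oplus,q}$, strong otherwise. *)

(* Defs.v *)
From HB Require Import structures.
From mathcomp Require Import all_boot.
From mathcomp Require Import finmap.

Set Implicit Arguments.
Unset Strict Implicit.
Unset Printing Implicit Defensive.

Local Open Scope fset_scope.

(** Variables and constants are both encoded by natural numbers;
    a term is [inl x] (variable x) or [inr c] (constant c). *)
Definition var := nat.
Definition const := nat.
Definition term := (var + const)%type.

Definition atom := (nat * seq term)%type.
Definition rel_name (F : atom) : nat := F.1.
Definition args (F : atom) : seq term := F.2.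

Definition query := {fset atom}.

(** A signature assigns to every relation name a pair [n, k]
    (arity n, primary key positions 1..k). *)
Definition signature := nat -> nat * nat.

Definition term_var (t : term) : option var :=
  if t is inl x then Some x else None.

Definition term_vars (s : seq term) : {fset var} := [fset x in pmap term_var s].

Definition vars (F : atom) : {fset var} := term_vars (args F).
Definition key (sg : signature) (F : atom) : {fset var} :=
  term_vars (take (sg (rel_name F)).2 (args F)).

Definition in_vars_query (q : query) (x : var) : Prop :=
  exists2 F, F \in q & x \in vars F.

Definition well_typed (sg : signature) (q : query) : Prop :=
  forall F, F \in q ->
    size (args F) = (sg (rel_name F)).1 /\ (sg (rel_name F)).2 <= (sg (rel_name F)).1.

Definition no_self_join (q : query) : Prop :=
  forall F G, F \in q -> G \in q -> rel_name F = rel_name G -> F = G.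

Definition subst_term (z : var) (c : const) (t : term) : term :=
  match t with
  | inl x => if x == z then inr c else t
  | inr _ => t
  end.
Definition subst_atom (z : var) (c : const) (F : atom) : atom :=
  (rel_name F, map (subst_term z c) (args F)).
Definition subst_query (z : var) (c : const) (q : query) : query :=
  [fset subst_atom z c F | F in q].

(** Logical implication of FDs:  FD(Q) |= X -> x, where
    FD(Q) = { key(H) -> vars(H) | H in Q }. *)
Inductive fd_closure (sg : signature) (Q : query) (X : {fset var}) : var -> Prop :=
| fdc_base x : x \in X -> fd_closure sg Q X x
| fdc_step H x : H \in Q -> (forall y, y \in key sg H -> fd_closure sg Q X y) ->
    x \in vars H -> fd_closure sg Q X x.

Definition plus_closure (sg : signature) (q : query) (F : atom) (x : var) : Prop :=
  in_vars_query q x /\ fd_closure sg (q `\ F) (key sg F) x.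

Definition oplus_closure (sg : signature) (q : query) (F : atom) (x : var) : Prop :=
  in_vars_query q x /\ fd_closure sg q (key sg F) x.

(** Undirected graphs on atoms are symmetric irreflexive relations [E].
    [upath E F p G]: F :: p is a simple path (no repeated vertex) from F to G. *)
Definition upath (E : rel atom) (F : atom) (p : seq atom) (G : atom) : bool :=
  [&& path E F p, last F p == G & uniq (F :: p)].

Definition is_tree_on (q : query) (E : rel atom) : Prop :=
  [/\ (forall F G, E F G -> F \in q /\ G \in q),
      symmetric E,
      irreflexive E,
      (forall F G, F \in q -> G \in q -> exists p, upath E F p G) &
      (forall F G p1 p2, upath E F p1 G -> upath E F p2 G -> p1 = p2)].

Definition is_join_tree (q : query) (E : rel atom) : Prop :=
  is_tree_on q E /\
  (forall F G p x, F \in q -> G \in q -> upath E F p G ->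
     x \in vars F -> x \in vars G -> forall H, H \in p -> x \in vars H).

Definition acyclic (q : query) : Prop := exists E, is_join_tree q E.

Definition label (A B : atom) : {fset var} := vars A `&` vars B.

(** F attacks G in the attack graph of the acyclic query q: F, G distinct
    atoms of q, and for the join tree (any one; we quantify over all join
    trees, the attack graph being independent of the choice), every label L
    on the path between F and G satisfies L ⊈ F^{+,q}. *)
Definition attacks (sg : signature) (q : query) (F G : atom) : Prop :=
  [/\ acyclic q, F \in q, G \in q, F <> G &
      forall E p, is_join_tree q E -> upath E F p G ->
        forall A B, (A, B) \in zip (F :: p) p ->
          exists2 x, x \in label A B & ~ plus_closure sg q F x].

Definition weak_attack (sg : signature) (q : query) (F G : atom) : Prop :=
  attacks sg q F G /\ (forall x, x \in key sg G -> oplus_closure sg q F x).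

(* Main.v *)
Require Import Defs.
From HB Require Import structures.
From mathcomp Require Import all_boot.
From mathcomp Require Import finmap.

Set Implicit Arguments.
Unset Strict Implicit.
Unset Printing Implicit Defensive.
Local Open Scope fset_scope.

Lemma mem_term_vars (s : seq term) x : (x \in term_vars s) = (inl x \in s).
Proof.
rewrite /term_vars inE mem_pmap.
elim: s => [|t s IH] //=; rewrite !in_cons IH; case: t => //=.
Qed.

Lemma eq_subst_term z c t x : (inl x == subst_term z c t) = (x != z) && (inl x == t).
Proof.
case: t => [y|d] /=; last by rewrite andbF.
case: (eqVneq y z) => [->|ne] /=; first by rewrite andbC; case: (eqVneq (inl x : term) (inl z)) => // -[->]; rewrite eqxx.
case: (eqVneq (inl x : term) (inl y)) => [[->]|]; by rewrite ?ne ?andbF.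
Qed.

Lemma mem_term_vars_subst z c (s : seq term) x :
  (x \in term_vars (map (subst_term z c) s)) = (x != z) && (x \in term_vars s).
Proof.
rewrite !mem_term_vars; elim: s => [|t s IH]; first by rewrite andbF.
by rewrite /= !in_cons IH eq_subst_term andb_orr.
Qed.

Lemma vars_subst z c A x : (x \in vars (subst_atom z c A)) = (x != z) && (x \in vars A).
Proof. exact: mem_term_vars_subst. Qed.

Lemma key_subst sg z c A x : (x \in key sg (subst_atom z c A)) = (x != z) && (x \in key sg A).
Proof. by rewrite /key /= -map_take mem_term_vars_subst. Qed.

Lemma subst_inj (q : query) z c : no_self_join q -> {in q &, injective (subst_atom z c)}.
Proof. by move=> ns A B hA hB e; apply: ns => //; have := congr1 fst e. Qed.

Lemma fd_subst sg z c (Q Q' : query) (X X' : {fset var}) x :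
  (forall H, H \in Q -> subst_atom z c H \in Q') ->
  (forall y, y \in X -> y = z \/ y \in X') ->
  fd_closure sg Q X x -> x = z \/ fd_closure sg Q' X' x.
Proof.
move=> hQ hX; elim=> [y /hX [->|h]|H y hH _ IH hy]; [by left|by right; constructor|].
case: (eqVneq y z) => [->|ne]; [by left|right].
apply: (@fdc_step _ _ _ (subst_atom z c H)); first exact: hQ.
- move=> w; rewrite key_subst => /andP[wz /IH [e|//]]; by rewrite e eqxx in wz.
- by rewrite vars_subst ne.
Qed.

Definition img_rel (q : query) (f : atom -> atom) (E : rel atom) : rel atom :=
  fun A' B' => has (fun A => has (fun B => [&& E A B, f A == A' & f B == B']) q) q.

Lemma img_relP (q : query) (f : atom -> atom) (E : rel atom) (A' B' : atom) :
  reflect (exists A B, [/\ A \in q, B \in q, E A B, f A = A' & f B = B'])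
          (img_rel q f E A' B').
Proof.
apply: (iffP hasP) => [[A hA /hasP[B hB /and3P[e /eqP h1 /eqP h2]]]|[A [B [hA hB e h1 h2]]]].
  by exists A, B.
by exists A => //; apply/hasP; exists B => //; rewrite e h1 h2 !eqxx.
Qed.

Lemma path_in (q : query) (E : rel atom) A p :
  (forall A B, E A B -> A \in q /\ B \in q) -> A \in q -> path E A p -> all (mem q) (A :: p).
Proof.
move=> hE; elim: p A => [|B p IH] A hA /=; first by rewrite hA.
move=> /andP[e hp]; have [_ hB] := hE _ _ e.
by rewrite hA /=; have /= := IH B hB hp.
Qed.

Lemma path_img (q : query) (f : atom -> atom) (E : rel atom) A p :
  (forall A B, E A B -> A \in q /\ B \in q) -> A \in q -> path E A p ->
  path (img_rel q f E) (f A) (map f p).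
Proof.
move=> hE; elim: p A => [|B p IH] A hA //=.
move=> /andP[e hp]; have [_ hB] := hE _ _ e.
rewrite IH // andbT; apply/img_relP; by exists A, B.
Qed.

Lemma path_lift (q : query) (f : atom -> atom) (E : rel atom) A p' :
  {in q &, injective f} -> A \in q -> path (img_rel q f E) (f A) p' ->
  exists2 p, p' = map f p & path E A p.
Proof.
move=> hf; elim: p' A => [|B' p' IH] A hA /=; first by exists [::].
move=> /andP[/img_relP [A1 [B1 [hA1 hB1 e h1 h2]]] hp].
have eA : A1 = A by apply: hf.
subst A1 B'; have [p -> hp2] := IH B1 hB1 hp.
by exists (B1 :: p) => //=; rewrite e.
Qed.

Lemma upath_img (q : query) (f : atom -> atom) (E : rel atom) A p B :
  (forall A B, E A B -> A \in q /\ B \in q) -> {in q &, injective f} ->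
  A \in q -> upath E A p B -> upath (img_rel q f E) (f A) (map f p) (f B).
Proof.
move=> hE hf hA /and3P[hp /eqP hl hu]; apply/and3P; split.
- exact: path_img.
- by rewrite last_map hl.
- have hall := path_in hE hA hp.
  rewrite -(map_cons f) map_inj_in_uniq // => x y hx hy; apply: hf.
  + exact: (allP hall).
  + exact: (allP hall).
Qed.

Lemma upath_lift (q : query) (f : atom -> atom) (E : rel atom) A p' B :
  (forall A B, E A B -> A \in q /\ B \in q) -> {in q &, injective f} ->
  A \in q -> B \in q -> upath (img_rel q f E) (f A) p' (f B) ->
  exists2 p, p' = map f p & upath E A p B.
Proof.
move=> hE hf hA hB /and3P[hp /eqP hl hu].
have [p ep hp2] := path_lift hf hA hp; subst p'.
have hall := path_in hE hA hp2.
exists p => //; apply/and3P; split => //.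
- rewrite last_map in hl; apply/eqP; apply: hf hl => //.
  exact: (allP hall) (mem_last _ _).
- move: hu; rewrite -(map_cons f) map_inj_in_uniq // => x y hx hy; apply: hf.
  + exact: (allP hall).
  + exact: (allP hall).
Qed.

Lemma mem_subst_query (q : query) z c A' :
  reflect (exists2 A, A \in q & A' = subst_atom z c A) (A' \in subst_query z c q).
Proof. exact: imfsetP. Qed.

Lemma subst_in (q : query) z c A : A \in q -> subst_atom z c A \in subst_query z c q.
Proof. by move=> hA; apply/mem_subst_query; exists A. Qed.

Lemma join_tree_subst (q : query) z c E :
  no_self_join q -> is_join_tree q E ->
  is_join_tree (subst_query z c q) (img_rel q (subst_atom z c) E).
Proof.
move=> ns [[hE hsym hirr hconn huniq] hjoin].
have hf := @subst_inj q z c ns.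
set s := subst_atom z c; set q' := subst_query z c q; set E' := img_rel q s E.
have hE' : forall A B, E' A B -> A \in q' /\ B \in q'.
  by move=> A' B' /img_relP[A [B [hA hB _ <- <-]]]; split; apply: subst_in.
split; first split.
- exact: hE'.
- move=> A' B'; apply/idP/idP => /img_relP[A [B [hA hB e h1 h2]]];
    apply/img_relP; exists B, A; by split => //; rewrite hsym.
- move=> A'; apply/negP => /img_relP[A [B [hA hB e h1 h2]]].
  have eAB : A = B by apply: hf => //; rewrite /s in h1 h2 *; congruence.
  by subst B; rewrite hirr in e.
- move=> F' G' /mem_subst_query[F hF ->] /mem_subst_query[G hG ->].
  have [p hp] := hconn F G hF hG.
  by exists (map s p); apply: upath_img.
- move=> F' G' p1 p2.
  case: (boolP (F' \in q')) => [hF'|nF'].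
    move=> h1 h2.
    have hG' : G' \in q'.
      move: h1 => /and3P[hp /eqP hl _].
      by rewrite -hl; apply: (allP (path_in hE' hF' hp)); apply: mem_last.
    move: hF' hG' h1 h2 => /mem_subst_query[F hF ->] /mem_subst_query[G hG ->] h1 h2.
    have [r1 -> hr1] := upath_lift hE hf hF hG h1.
    have [r2 -> hr2] := upath_lift hE hf hF hG h2.
    by rewrite (huniq _ _ _ _ hr1 hr2).
  have nil_of : forall p, upath E' F' p G' -> p = [::].
    case=> [//|B p] /and3P[/= /andP[e _] _ _].
    by have [hh _] := hE' _ _ e; rewrite hh in nF'.
  by move=> /nil_of -> /nil_of ->.
- move=> F' G' p x /mem_subst_query[F hF ->] /mem_subst_query[G hG ->] hp.
  have [r -> hr] := upath_lift hE hf hF hG hp.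
  rewrite !vars_subst => /andP[xz hxF] /andP[_ hxG] H' /mapP[H hH ->].
  by rewrite vars_subst xz (hjoin F G r x hF hG hr hxF hxG H hH).
Qed.

Lemma zip_map2 (f : atom -> atom) (l1 l2 : seq atom) :
  zip (map f l1) (map f l2) = map (fun xy => (f xy.1, f xy.2)) (zip l1 l2).
Proof. by elim: l1 l2 => [|a l1 IH] [|b l2] //=; rewrite IH. Qed.

Lemma in_vars_subst (q : query) z c x :
  x != z -> in_vars_query q x -> in_vars_query (subst_query z c q) x.
Proof.
move=> xz [H hH hx]; exists (subst_atom z c H); first exact: subst_in.
by rewrite vars_subst xz.
Qed.

Lemma key_split sg z c F y : y \in key sg F -> y = z \/ y \in key sg (subst_atom z c F).
Proof.
move=> hy; case: (eqVneq y z) => [->|ne]; [by left|right].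
by rewrite key_subst ne.
Qed.

Lemma plus_subst sg (q : query) z c F x :
  no_self_join q -> F \in q -> x != z -> plus_closure sg q F x ->
  plus_closure sg (subst_query z c q) (subst_atom z c F) x.
Proof.
move=> ns hF xz [hv hfd]; split; first exact: in_vars_subst.
have := @fd_subst sg z c (q `\ F) (subst_query z c q `\ subst_atom z c F)
  (key sg F) (key sg (subst_atom z c F)) x.
case.
- move=> H; rewrite !inE => /andP[ne hH]; rewrite subst_in // andbT.
  apply/negP => /eqP e; move/negP: ne; apply; apply/eqP.
  exact: (@subst_inj q z c ns).
- exact: key_split.
- exact: hfd.
- by move=> e; rewrite e eqxx in xz.
- done.
Qed.

Theorem lemma5 (sg : signature) (q : query) (F G : atom) (z : var) (c : const) :
  well_typed sg q -> acyclic q -> no_self_join q ->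
  F \in q -> G \in q -> in_vars_query q z ->
  [/\ acyclic (subst_query z c q),
      (attacks sg (subst_query z c q) (subst_atom z c F) (subst_atom z c G) ->
         attacks sg q F G) &
      (attacks sg (subst_query z c q) (subst_atom z c F) (subst_atom z c G) ->
         weak_attack sg q F G ->
         weak_attack sg (subst_query z c q) (subst_atom z c F) (subst_atom z c G))].
Proof.
move=> _ ac ns hF hG _.
have hf := @subst_inj q z c ns.
split.
- by case: ac => E hj; exists (img_rel q (subst_atom z c) E); apply: join_tree_subst.
- case=> _ _ _ ne hatt; split => //.
    by move=> e; apply: ne; rewrite e.
  move=> E p hj hp A B hAB.
  have hE : forall A B, E A B -> A \in q /\ B \in q by case: hj => -[].
  have hp' := upath_img hE hf hF hp.
  have hmem : (subst_atom z c A, subst_atom z c B) \in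
      zip (subst_atom z c F :: map (subst_atom z c) p) (map (subst_atom z c) p).
    by rewrite -map_cons zip_map2; apply: (map_f (fun xy => (subst_atom z c xy.1, subst_atom z c xy.2)) hAB).
  have [x hx hnp] := hatt _ _ (join_tree_subst z c ns hj) hp' _ _ hmem.
  move: hx; rewrite /label in_fsetI !vars_subst => /andP[/andP[xz hxA] /andP[_ hxB]].
  exists x; first by rewrite /label in_fsetI hxA hxB.
  by move=> hpl; apply: hnp; apply: plus_subst.
- move=> h [_ hk]; split => // x; rewrite key_subst => /andP[xz hx].
  have [hv hfd] := hk x hx; split; first exact: in_vars_subst.
  have := @fd_subst sg z c q (subst_query z c q) (key sg F) (key sg (subst_atom z c F)) x.
  case.
  + by move=> H hH; apply: subst_in.
  + exact: key_split.
  + exact: hfd.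
  + by move=> e; rewrite e eqxx in xz.
  + done.
Qed.
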